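(* Let $V$ be a two-sided vector space of rank $n$. For a simultaneous basis $y_1,\dots,y_n$ of $V$, let $\phi_1,\dots,\phi_n\in{}^*V$ be given by $\phi_i(y_j)=\delta_{ij}$, and let $\eta:K\to{}^*V\otimes_KV$ be $\eta(a)=a\sum_i\phi_i\otimes y_i$. Then the image of $\eta$ is independent of the choice of simultaneous basis.
   Context: Let $k\subset K$ be fields. A two-sided vector space is a $K\otimes_kK$-module; left (resp. right) multiplication by $K$ is the action of $K\otimes1$ (resp. $1\otimes K$). Rank $n$ means dimension $n$ both as a left and as a right $K$-vector space; a simultaneous basis is a basis for both actions. The left dual ${}^*V$ is $\operatorname{Hom}_K({}_KV,K)$ (left $K$-linear maps) with action $(a\cdot\phi\cdot b)(x)=b\phi(xa)$. The tensor product ${}^*V\otimes_KV$ is formed using the right $K$-action on ${}^*V$ and the left $K$-action on $V$. *)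

(* Defs.v *)
From HB Require Import structures.
From mathcomp Require Import all_boot all_algebra.
Set Implicit Arguments. Unset Strict Implicit. Unset Printing Implicit Defensive.
Import GRing.Theory.
Local Open Scope ring_scope.

(* Two-sided vector spaces over k ⊂ K (k embedded in K by the field morphism f):
   a K⊗_k K-module, i.e. an abelian group with a left and a right K-action,
   commuting with each other, and such that k acts identically on both sides. *)
Record twoSidedSpace (k K : fieldType) (f : {rmorphism k -> K}) := TwoSidedSpace {
  tsV :> zmodType;
  lact : K -> tsV -> tsV;
  ract : tsV -> K -> tsV;
  lact1 : forall x, lact 1 x = x;
  lactM : forall a b x, lact (a * b) x = lact a (lact b x);
  lactDl : forall a b x, lact (a + b) x = lact a x + lact b x;
  lactDr : forall a x y, lact a (x + y) = lact a x + lact a y;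
  ract1 : forall x, ract x 1 = x;
  ractM : forall a b x, ract x (a * b) = ract (ract x a) b;
  ractDl : forall a b x, ract x (a + b) = ract x a + ract x b;
  ractDr : forall a x y, ract (x + y) a = ract x a + ract y a;
  lractA : forall a b x, lact a (ract x b) = ract (lact a x) b;
  k_central : forall c x, lact (f c) x = ract x (f c)
}.

Arguments lact {k K f} t.
Arguments ract {k K f} t.

Section Defs.
Context (k K : fieldType) (f : {rmorphism k -> K}) (V : twoSidedSpace f).

Definition left_basis (n : nat) (y : 'I_n -> V) : Prop :=
  (forall x : V, exists c : 'I_n -> K, x = \sum_(i < n) lact V (c i) (y i)) /\
  (forall c : 'I_n -> K, \sum_(i < n) lact V (c i) (y i) = 0 -> forall i, c i = 0).

Definition right_basis (n : nat) (y : 'I_n -> V) : Prop :=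
  (forall x : V, exists c : 'I_n -> K, x = \sum_(i < n) ract V (y i) (c i)) /\
  (forall c : 'I_n -> K, \sum_(i < n) ract V (y i) (c i) = 0 -> forall i, c i = 0).

Definition has_rank (n : nat) : Prop :=
  (exists y : 'I_n -> V, left_basis y) /\ (exists y : 'I_n -> V, right_basis y).

Definition simultaneous_basis (n : nat) (y : 'I_n -> V) : Prop :=
  left_basis y /\ right_basis y.

Definition left_linear (phi : V -> K) : Prop :=
  (forall x y, phi (x + y) = phi x + phi y) /\
  (forall a x, phi (lact V a x) = a * phi x).

Definition dual := {phi : V -> K | left_linear phi}.

Lemma dadd_lin (phi psi : dual) : left_linear (fun x => sval phi x + sval psi x).
Proof.
case: phi psi => [p [p1 p2]] [q [q1 q2]] /=; split=> *.
  by rewrite p1 q1 addrACA.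
by rewrite p2 q2 mulrDr.
Qed.
Definition dadd (phi psi : dual) : dual := exist _ _ (dadd_lin phi psi).

Lemma dzero_lin : left_linear (fun _ => 0).
Proof. by split=> *; rewrite ?addr0 ?mulr0. Qed.
Definition dzero : dual := exist _ _ dzero_lin.

Lemma dract_lin (phi : dual) (b : K) : left_linear (fun x => b * sval phi x).
Proof.
case: phi => [p [p1 p2]] /=; split=> *; first by rewrite p1 mulrDr.
by rewrite p2 mulrCA.
Qed.
Definition dract (phi : dual) (b : K) : dual := exist _ _ (dract_lin phi b).

Lemma dlact_lin (a : K) (phi : dual) : left_linear (fun x => sval phi (ract V x a)).
Proof.
case: phi => [p [p1 p2]] /=; split=> *; first by rewrite ractDr p1.
by rewrite -lractA p2.
Qed.
Definition dlact (a : K) (phi : dual) : dual := exist _ _ (dlact_lin a phi).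

(* The tensor product *V ⊗_K V, presented by generators and relations:
   an element is a finite formal sum of pure tensors phi ⊗ v (a list of pairs),
   and [teq] is the congruence generated by biadditivity, K-balancedness
   (phi·b) ⊗ v = phi ⊗ (b·v), and 0 ⊗ v = 0 (the latter makes the
   presented commutative monoid the presented abelian group). *)
Definition tensor := seq (dual * V).

Inductive teq : tensor -> tensor -> Prop :=
| teq_refl s : teq s s
| teq_sym s t : teq s t -> teq t s
| teq_trans s t u : teq s t -> teq t u -> teq s u
| teq_cat s s' t t' : teq s s' -> teq t t' -> teq (s ++ t) (s' ++ t')
| teq_catC s t : teq (s ++ t) (t ++ s)
| teq_addl phi psi v : teq [:: (dadd phi psi, v)] [:: (phi, v); (psi, v)]
| teq_addr phi v w : teq [:: (phi, v + w)] [:: (phi, v); (phi, w)]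
| teq_bal phi b v : teq [:: (dract phi b, v)] [:: (phi, lact V b v)]
| teq_zero v : teq [:: (dzero, v)] [::].

Definition tlact (a : K) (s : tensor) : tensor :=
  [seq (dlact a p.1, p.2) | p <- s].

Definition etaV (n : nat) (phi : 'I_n -> dual) (y : 'I_n -> V) (a : K) : tensor :=
  tlact a [seq (phi i, y i) | i <- enum 'I_n].

End Defs.

(* Main.v *)
Require Import Defs.
From HB Require Import structures.
From mathcomp Require Import all_boot all_algebra.
From Stdlib Require Import ProofIrrelevance FunctionalExtensionality.
Import GRing.Theory.
Set Implicit Arguments. Unset Strict Implicit.
Local Open Scope ring_scope.

Section Helpers.
Context (k K : fieldType) (f : {rmorphism k -> K}) (V : twoSidedSpace f).

Lemma dual_ext (p q : dual V) : (forall x, sval p x = sval q x) -> p = q.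
Proof.
case: p q => [p hp] [q hq] /= h.
have e : p = q by apply: functional_extensionality.
subst q; by rewrite (proof_irrelevance _ hp hq).
Qed.

Lemma lact0 (x : tsV V) : lact V 0 x = 0.
Proof.
have h := @lactDl _ _ _ V 0 0 x; rewrite addr0 in h.
by apply: (addrI (lact V 0 x)); rewrite addr0 -h.
Qed.

Lemma lin_sum (p : dual V) I (r : seq I) (d : I -> K) (w : I -> tsV V) :
  sval p (\sum_(m <- r) lact V (d m) (w m)) = \sum_(m <- r) d m * sval p (w m).
Proof.
case: p => [p [p1 p2]] /=; elim: r => [|m r IH].
  by rewrite !big_nil -(lact0 0) p2 mul0r.
by rewrite !big_cons p1 p2 IH.
Qed.

Lemma teq_map I (r : seq I) (F G : I -> dual V * tsV V) :
  (forall i, teq [:: F i] [:: G i]) -> teq (map F r) (map G r).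
Proof.
move=> h; elim: r => [|i r IH] /=; first exact: teq_refl.
exact: (teq_cat (h i) IH).
Qed.

Lemma teq_flat I (r : seq I) (F G : I -> seq (dual V * tsV V)) :
  (forall i, teq (F i) (G i)) -> teq (flatten (map F r)) (flatten (map G r)).
Proof.
move=> h; elim: r => [|i r IH] /=; first exact: teq_refl.
exact: (teq_cat (h i) IH).
Qed.

Lemma map_flat1 I (r : seq I) (F : I -> dual V * tsV V) :
  map F r = flatten [seq [:: F i] | i <- r].
Proof. by elim: r => //= i r ->. Qed.

Lemma teq_split (phi : dual V) I (r : seq I) (c : I -> K) (z : I -> tsV V) :
  teq [:: (phi, \sum_(j <- r) lact V (c j) (z j))]
      [seq (dract phi (c j), z j) | j <- r].
Proof.
elim: r => [|j r IH] /=.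
  rewrite big_nil -(lact0 0).
  apply: teq_trans; first exact/teq_sym/teq_bal.
  have -> : dract phi 0 = dzero V by apply: dual_ext => x /=; rewrite mul0r.
  exact: teq_zero.
rewrite big_cons; apply: teq_trans; first exact: teq_addr.
apply: (teq_cat (s := [:: _]) (s' := [:: _]) _ IH).
exact/teq_sym/teq_bal.
Qed.

Definition dsum I (r : seq I) (p : I -> dual V) :=
  foldr (fun i acc => dadd (p i) acc) (dzero V) r.

Lemma dsumE I (r : seq I) (p : I -> dual V) x :
  sval (dsum r p) x = \sum_(i <- r) sval (p i) x.
Proof. by elim: r => [|i r IH] /=; rewrite ?big_nil ?big_cons ?IH. Qed.

Lemma teq_merge I (r : seq I) (p : I -> dual V) (v : tsV V) :
  teq [seq (p i, v) | i <- r] [:: (dsum r p, v)].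
Proof.
elim: r => [|i r IH] /=; first exact/teq_sym/teq_zero.
apply: teq_trans; last exact/teq_sym/teq_addl.
exact: (teq_cat (teq_refl [:: _]) IH).
Qed.

Lemma flat_nil I (r : seq I) : flatten [seq [::] : seq (dual V * tsV V) | _ <- r] = [::].
Proof. by elim: r. Qed.

Lemma teq_aux I (r : seq I) (g : I -> dual V * tsV V) (L : I -> seq (dual V * tsV V)) :
  teq (map g r ++ flatten (map L r)) (flatten [seq g j :: L j | j <- r]).
Proof.
elim: r => [|j r IH] /=; first exact: teq_refl.
apply: (teq_cat (s := [:: g j]) (s' := [:: g j])); first exact: teq_refl.
rewrite catA; apply: teq_trans.
  by apply: (teq_cat (teq_catC _ _) (teq_refl _)).
rewrite -catA; exact: teq_cat (teq_refl _) IH.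
Qed.

Lemma teq_exch I J (r : seq I) (s : seq J) (F : I -> J -> dual V * tsV V) :
  teq (flatten [seq [seq F i j | j <- s] | i <- r])
      (flatten [seq [seq F i j | i <- r] | j <- s]).
Proof.
elim: r => [|i r IH] /=; first by rewrite flat_nil; exact: teq_refl.
apply: teq_trans; first exact: (teq_cat (teq_refl _) IH).
exact: (teq_aux s (fun j => F i j) (fun j => [seq F i' j | i' <- r])).
Qed.

Lemma key I (r : seq I) (phi psi : I -> dual V) (y z : I -> tsV V) (c : I -> I -> K) :
  (forall i, y i = \sum_(j <- r) lact V (c i j) (z j)) ->
  (forall j x, sval (psi j) x = \sum_(i <- r) c i j * sval (phi i) x) ->
  teq [seq (phi i, y i) | i <- r] [seq (psi j, z j) | j <- r].
Proof.
move=> hy hpsi.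
apply: teq_trans.
  rewrite map_flat1; apply: teq_flat => i; rewrite hy; exact: teq_split.
apply: teq_trans; first exact: teq_exch.
rewrite (map_flat1 r (fun j => (psi j, z j))); apply: teq_flat => j.
apply: teq_trans; first exact: teq_merge.
have -> : dsum r (fun i => dract (phi i) (c i j)) = psi j.
  by apply: dual_ext => x; rewrite dsumE hpsi.
exact: teq_refl.
Qed.

End Helpers.

Theorem proposition3p9 (k K : fieldType) (f : {rmorphism k -> K})
  (V : twoSidedSpace f) (n : nat) (Hrank : has_rank V n)
  (y z : 'I_n -> V) (phi psi : 'I_n -> dual V)
  (Hy : simultaneous_basis y) (Hz : simultaneous_basis z)
  (Hphi : forall i j, sval (phi i) (y j) = (i == j)%:R)
  (Hpsi : forall i j, sval (psi i) (z j) = (i == j)%:R) :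
  (forall a : K, exists b : K, teq (etaV phi y a) (etaV psi z b)) /\
  (forall b : K, exists a : K, teq (etaV phi y a) (etaV psi z b)).
Proof.
case: Hy => [[yspan _] _]; case: Hz => [[zspan _] _].
have [c hc] : exists c : 'I_n -> 'I_n -> K,
    forall i, y i = \sum_(j < n) lact V (c i j) (z j).
  exact: (@fin_all_exists _ (fun _ => 'I_n -> K) (fun i c => y i = \sum_(j < n) lact V (c j) (z j)) (fun i => zspan (y i))).
have delta (d : 'I_n -> K) j : \sum_(l < n) d l * (j == l)%:R = d j.
  rewrite (bigD1 j) //= eqxx mulr1 big1 ?addr0 // => l hl.
  by rewrite eq_sym (negbTE hl) mulr0.
have hpsi : forall j x, sval (psi j) x = \sum_(i < n) c i j * sval (phi i) x.
  move=> j x; have [d ->] := yspan x.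
  rewrite lin_sum.
  under [RHS]eq_bigr => i _ do rewrite lin_sum big_distrr /=.
  rewrite exchange_big /=; apply: eq_bigr => m _.
  rewrite {1}hc lin_sum.
  transitivity (d m * c m j).
    congr (_ * _); apply: etrans (delta (c m) j).
    by apply: eq_bigr => l _; rewrite Hpsi.
  symmetry; rewrite mulrC; apply: etrans (delta (fun i => c i j * d m) m).
  by apply: eq_bigr => i _; rewrite Hphi mulrA eq_sym.
have main a : teq (etaV phi y a) (etaV psi z a).
  rewrite /etaV /tlact -!map_comp.
  have E : Finite.enum 'I_n = index_enum 'I_n by rewrite [index_enum _]unlock.
  rewrite E.
  apply: (key (c := c)) => [i | j x] /=; first exact: hc.
  exact: hpsi.
by split=> a; exists a; exact: main.
Qed.
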